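(* For $n\ge1$ and $0\le k\le n$: (a) the coefficients $b_{n,k}$ are integers; (b) $a_{n,k}\ge0$ and $b_{n,k}\ge0$; (c) $a_{n,k-1}\le a_{n,k}$ for $1\le k\le n$; (d) $a_{n,0}=(n-1)!$.
   Context: Let $V$ be the unique solution, in the ring of formal series $\sum_{n\ge0}q_n(y)x^{-n}$ with $q_n$ complex polynomials of degree $\le n$, of $V=1+\frac{y}{x}-\frac{1}{x}V-V_x-\frac{1}{x}V_y+\frac{1}{x}\log V$ (termwise formal derivatives $V_x,V_y$; formal logarithm series). Define polynomials $P_{n-1}$, $Q_n$ by $V=1+\sum_{n\ge1}P_{n-1}(y)x^{-n}$, $\log V=\sum_{n\ge1}Q_n(y)x^{-n}$; equivalently $P_0=y-1$ and $P_n=nP_{n-1}-P'_{n-1}+\frac1n\sum_{k=1}^{n-1}k\{(k-1)P_{k-1}-P_k-P'_{k-1}\}P_{n-k-1}$. For $n\ge1$ define $a_{n,k},b_{n,k}$ ($0\le k\le n$) by $P_n(y)=\frac{(-1)^{n+1}}{n!}\sum_{k=0}^n(-1)^ka_{n,k}y^{n-k}$ and $Q_n(y)=\frac{(-1)^{n+1}}{n!}\sum_{k=0}^n(-1)^kb_{n,k}y^{n-k}$. *)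

(* Defs.v *)
From mathcomp Require Import all_boot all_order all_algebra.
Set Implicit Arguments. Unset Strict Implicit. Unset Printing Implicit Defensive.
Import Order.TTheory GRing.Theory Num.Theory.
Local Open Scope ring_scope.

Definition Pstep (n : nat) (s : seq {poly rat}) : {poly rat} :=
  let P := fun i => nth 0 s i in
  n%:R *: P n.-1 - (P n.-1)^`()
  + (n%:R)^-1 *: \sum_(1 <= k < n)
      (k%:R *: ((k.-1)%:R *: P k.-1 - P k - (P k.-1)^`()) * P (n - k).-1).

Fixpoint Pseq (n : nat) : seq {poly rat} :=
  match n with
  | 0 => [:: 'X - 1]
  | m.+1 => rcons (Pseq m) (Pstep m.+1 (Pseq m))
  end.

Definition P (n : nat) : {poly rat} := nth 0 (Pseq n) n.

(* W = V - 1 = sum_{i>=0} P_i t^(i+1), t = 1/x, truncated at order n,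
   as a polynomial in t with coefficients in {poly rat} (polys in y). *)
Definition Wtrunc (n : nat) : {poly {poly rat}} :=
  \sum_(i < n) (P i)%:P * 'X^(i.+1).

(* Q_n = coefficient of t^n in log(1+W) = sum_{m>=1} (-1)^(m+1) W^m / m;
   only m <= n contribute to t^n. *)
Definition Q (n : nat) : {poly rat} :=
  (\sum_(1 <= m < n.+1)
     (((-1) ^+ m.+1 / m%:R : rat)%:P)%:P * Wtrunc n ^+ m)`_n.

(* P_n(y) = (-1)^(n+1)/n! sum_k (-1)^k a_{n,k} y^(n-k), likewise Q_n, b_{n,k}. *)
Definition a (n k : nat) : rat := (-1) ^+ (n.+1 + k) * n`!%:R * (P n)`_(n - k).
Definition b (n k : nat) : rat := (-1) ^+ (n.+1 + k) * n`!%:R * (Q n)`_(n - k).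

(* Main.v *)
Require Import Defs.
From mathcomp Require Import all_boot all_order all_algebra.
From mathcomp Require Import ring lra zify.
Import Order.TTheory GRing.Theory Num.Theory.
Local Open Scope ring_scope.
Lemma size_Pseq m : size (Pseq m) = m.+1.
Proof. by elim: m => //= m IH; rewrite size_rcons IH. Qed.

Lemma nth_Pseq m i : (i <= m)%N -> nth 0 (Pseq m) i = P i.
Proof.
rewrite /P; elim: m => [|m IH] /=; first by rewrite leqn0 => /eqP ->.
rewrite leq_eqVlt => /orP[/eqP->//|him].
by rewrite nth_rcons size_Pseq him IH.
Qed.

Lemma P_rec n : P n.+1 = n.+1%:R *: P n - (P n)^`()
  + (n.+1%:R)^-1 *: \sum_(1 <= k < n.+1)
      (k%:R *: ((k.-1)%:R *: P k.-1 - P k - (P k.-1)^`()) * P (n - k)).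
Proof.
rewrite {1}/P /= nth_rcons size_Pseq ltnn eqxx /Pstep /= nth_Pseq //.
congr (_ + _ *: _); apply: eq_big_nat => k /andP[k1 kn].
by rewrite !nth_Pseq // ?subSKn //; lia.
Qed.
Definition Vs (i : nat) : {poly rat} := if i is i'.+1 then P i' else 1.
Definition Lam (k : nat) : {poly rat} :=
  if k is k'.+1 then P k'.+1 - k'%:R *: P k' + (P k')^`() else 0.

Lemma LamE k : Lam k.+1 = P k.+1 - k%:R *: P k + (P k)^`().
Proof. by []. Qed.

Lemma LamN k : k.+1%:R *: (k%:R *: P k - P k.+1 - (P k)^`()) = - (Lam k.+1 *+ k.+1).
Proof.
rewrite LamE scaler_nat -mulNrn; congr (_ *+ _); ring.
Qed.

Lemma Xlam j : \sum_(i < j.+1) Vs i * (Lam (j - i).+1 *+ (j - i).+1)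
   = P j *+ j.+1.
Proof.
set S := \sum_(1 <= k < j.+1)
      (k%:R *: ((k.-1)%:R *: P k.-1 - P k - (P k.-1)^`()) * P (j - k)).
have HS : \sum_(i < j) Vs (lift ord0 i) * (Lam (j - lift ord0 i).+1
     *+ (j - lift ord0 i).+1) = - S.
  rewrite /S big_add1 /= big_nat_rev /= big_mkord -sumrN.
  apply: eq_bigr => i _.
  have hi := ltn_ord i.
  change (P i * (Lam (j - i.+1).+1 *+ (j - i.+1).+1) = - (((j - i.+1).+1)%:R *: (((j - i.+1).+1).-1%:R *: P ((j - i.+1).+1).-1 - P (j - i.+1).+1 - (P ((j - i.+1).+1).-1)^`()) * P (j - (j - i.+1).+1))).
  have -> : (j - (j - i.+1).+1)%N = i by lia.
  by rewrite /= LamN mulrC mulNr opprK.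
rewrite big_ord_recl HS subn0 [Vs _]/= mul1r LamE P_rec.
have hj : (j.+1%:R : rat) != 0 by rewrite pnatr_eq0.
set T := (j.+1%:R)^-1 *: S.
have hT : T *+ j.+1 = S by rewrite /T -scaler_nat scalerA mulfV // scale1r.
rewrite -hT !scaler_nat; ring.
Qed.
Definition LgW (W : {poly {poly rat}}) N : {poly {poly rat}} :=
  \sum_(1 <= m < N.+1) (((-1) ^+ m.+1 / m%:R : rat)%:P)%:P * W ^+ m.

Lemma Q_Lg n : Q n = (LgW (Wtrunc n) n)`_n.
Proof. by []. Qed.

Lemma dX (d : {poly {poly rat}} -> {poly {poly rat}})
  (dM : forall x y, d (x * y) = d x * y + x * d y) W m :
  d (W ^+ m.+1) = W ^+ m * d W *+ m.+1.
Proof.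
elim: m => [|m IH]; first by rewrite expr1 expr0 mul1r.
rewrite exprS dM IH [X in _ = X]mulrS mulrC mulrnAr mulrA -exprS.
done.
Qed.

Lemma dLg (d : {poly {poly rat}} -> {poly {poly rat}})
  (dD : forall x y, d (x + y) = d x + d y)
  (dM : forall x y, d (x * y) = d x * y + x * d y)
  (dC : forall r : rat, d (r%:P%:P) = 0) W N :
  (1 + W) * d (LgW W N) = d W * (1 - (-W) ^+ N).
Proof.
have d0 : d 0 = 0 by have := dC 0; rewrite !polyC0.
elim: N => [|N IH].
  by rewrite /LgW big_geq // d0 mulr0 expr0 subrr mulr0.
rewrite /LgW big_nat_recr // -/(LgW W N) dD dM dC mul0r add0r dX //.
set D := d W; set L := d (LgW W N).
have e : ((-1) ^+ N.+2 / N.+1%:R *+ N.+1 : rat) = (-1)^+N.+2.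
  rewrite -mulr_natr divfK //; by rewrite pnatr_eq0.

have hc : ((((-1) ^+ N.+2 / N.+1%:R : rat)%:P)%:P * (W ^+ N * D *+ N.+1))
   = (-1) ^+ N.+2 * (W ^+ N * D).
  rewrite mulrnAr -mulrnAl -!polyCMn e.

  by rewrite !rmorphXn !rmorphN1.

rewrite hc mulrDr IH !(exprNn W) !exprS.
rewrite -/D.
set a := (-1) ^+ N; set w := W ^+ N.
ring.
Qed.
Definition dy (p : {poly {poly rat}}) : {poly {poly rat}} := map_poly (@deriv rat) p.

Lemma coef_dy p i : (dy p)`_i = (p`_i)^`().
Proof. by rewrite /dy coef_map. Qed.

Lemma dyD x y : dy (x + y) = dy x + dy y.
Proof. by apply/polyP => i; rewrite coefD !coef_dy coefD derivD. Qed.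

Lemma dyM x y : dy (x * y) = dy x * y + x * dy y.
Proof.
apply/polyP => i; rewrite coefD !coef_dy !coefM -big_split /=.
rewrite raddf_sum; apply: eq_bigr => j _.
by rewrite !coef_dy -derivM.
Qed.

Lemma dyC (r : rat) : dy (r%:P%:P) = 0.
Proof. by apply/polyP => i; rewrite coef_dy !coefC; case: (i == 0)%N; rewrite ?derivC ?deriv0. Qed.

Lemma coef_W N i : (Wtrunc N)`_i = if (0 < i <= N)%N then P i.-1 else 0.
Proof.
elim: N => [|N IH].
  by rewrite /Wtrunc big_ord0 coef0; case: i => [|[]].
rewrite /Wtrunc big_ord_recr /= -/(Wtrunc N) coefD IH coefCM coefXn.
clear IH; case: i => [|i] //=; first by rewrite mulr0 addr0.
rewrite eqSS; case: (ltngtP i N) => h.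
- by rewrite mulr0 addr0 ltnS (ltnW h).
- by rewrite mulr0 addr0 ltnS leqNgt h.
- by subst; rewrite mulr1 ltnS leqnn add0r.
Qed.

Lemma coef_1W N i : (i <= N)%N -> (1 + Wtrunc N)`_i = Vs i.
Proof.
rewrite coefD coef1 coef_W; case: i => [|i] /= h; first by rewrite addr0.
by rewrite h add0r.
Qed.

Lemma coef_pow0 (W : {poly {poly rat}}) m i : W`_0 = 0 -> (i < m)%N -> (W ^+ m)`_i = 0.
Proof.
move=> W0; elim: m i => [|m IH] i // him.
rewrite exprS coefM big1 // => [[j hj]] _ /=.
case: j hj => [|j] hj; first by rewrite W0 mul0r.
rewrite IH ?mulr0 //; lia.
Qed.

Lemma W0 N : (Wtrunc N)`_0 = 0.
Proof. by rewrite coef_W. Qed.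

Lemma LX N j : (j < N)%N ->
  \sum_(i < j.+1) Vs i * ((LgW (Wtrunc N) N)`_(j - i).+1 *+ (j - i).+1)
  = P j *+ j.+1.
Proof.
move=> hj.
have h0 := dLg (@deriv {poly rat}) (@derivD _) (@derivM _) (fun r => derivC _) (Wtrunc N) N.
have := congr1 (fun p : {poly {poly rat}} => p`_j) h0.
have E2 : ((Wtrunc N)^`() * (- Wtrunc N) ^+ N)`_j = 0.
  rewrite coefM big1 // => [[i hi]] _ /=.
  by rewrite coef_pow0 ?mulr0 ?coefN ?W0 ?oppr0 //; lia.
rewrite /= mulrBr mulr1 coefB E2 subr0 coef_deriv coef_W /= hj coefM => <-.
apply: eq_bigr => [[i hi]] _ /=.
by rewrite coef_1W ?coef_deriv //; lia.
Qed.

Lemma LY N j : (j < N)%N ->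
  \sum_(i < j.+1) Vs i * ((LgW (Wtrunc N) N)`_(j - i))^`()
  = (Vs j)^`().
Proof.
move=> hj.
have h0 := dLg dy dyD dyM dyC (Wtrunc N) N.
have := congr1 (fun p : {poly {poly rat}} => p`_j) h0.
have E2 : (dy (Wtrunc N) * (- Wtrunc N) ^+ N)`_j = 0.
  rewrite coefM big1 // => [[i hi]] _ /=.
  by rewrite coef_pow0 ?mulr0 ?coefN ?W0 ?oppr0 //; lia.
rewrite /= mulrBr mulr1 coefB E2 subr0 coef_dy coef_W coefM.
have -> : (if (0 < j <= N)%N then P j.-1 else 0)^`() = (Vs j)^`().
  by clear E2 h0; case: j hj => [|j] hj /=; rewrite ?derivC ?deriv0 // ifT //; lia.
move=> <-; apply: eq_bigr => [[i hi]] _ /=.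
by rewrite coef_1W ?coef_dy //; lia.
Qed.
Lemma mulrn_inj (p q : {poly rat}) n : p *+ n.+1 = q *+ n.+1 -> p = q.
Proof.
rewrite -!scaler_nat => /scalerI; apply; by rewrite pnatr_eq0.
Qed.

Lemma Lg0 N : (LgW (Wtrunc N) N)`_0 = 0.
Proof.
rewrite /LgW coef_sum big_nat big1 // => m /andP[m1 _].
by rewrite coefCM coef_pow0 ?W0 ?mulr0.
Qed.

Lemma LgLam N j : (j <= N)%N -> (LgW (Wtrunc N) N)`_j = Lam j.
Proof.
move=> hjN; move: j hjN.
suff H : forall j, (j <= N)%N -> forall k, (k <= j)%N -> (LgW (Wtrunc N) N)`_k = Lam k.
  by move=> j hjN; exact: (H j hjN j (leqnn j)).
elim=> [|j IH] hj k hk.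
  by move: hk; rewrite leqn0 => /eqP ->; rewrite Lg0.
move: hk; rewrite leq_eqVlt => /orP[/eqP ->|]; last by rewrite ltnS; apply: IH; lia.
have h1 := @LX N j hj.
rewrite -Xlam big_ord_recl [X in _ = X]big_ord_recl in h1.
have hs : \sum_(i < j) Vs (lift ord0 i) * ((LgW (Wtrunc N) N)`_(j - lift ord0 i).+1 *+ (j - lift ord0 i).+1)
   = \sum_(i < j) Vs (lift ord0 i) * (Lam (j - lift ord0 i).+1 *+ (j - lift ord0 i).+1).
  apply: eq_bigr => i _; rewrite IH //; have := ltn_ord i; rewrite /= /bump /=; lia.
rewrite hs in h1; move/addIr: h1; rewrite subn0 /= !mul1r.
exact: mulrn_inj.
Qed.

Lemma QLam n : Q n = Lam n.
Proof. by rewrite Q_Lg LgLam. Qed.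

Lemma Ylam j : \sum_(i < j.+1) Vs i * (Lam (j - i))^`() = (Vs j)^`().
Proof.
rewrite -(@LY j.+1 j) //; apply: eq_bigr => i _; rewrite LgLam //.
have := ltn_ord i; lia.
Qed.
Definition I1s k := (P k.+1)^`() = (P k)^`() - k%:R *: P k.

Lemma dP0 : (P 0)^`() = 1.
Proof. by rewrite /P /= derivB derivX derivC subr0. Qed.

Lemma I1_0 : I1s 0.
Proof.
rewrite /I1s P_rec big_geq // scaler0 addr0 scale0r subr0 scale1r derivB dP0.
by rewrite derivC subr0.
Qed.

Lemma LamI {k} : I1s k -> Lam k.+1 = P k.+1 + (P k.+1)^`().
Proof. by rewrite LamE /I1s => ->; rewrite addrA addrAC. Qed.

Lemma DLam0 k : I1s k -> I1s k.+1 ->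
  (Lam k.+2)^`() - (Lam k.+1)^`() + Lam k.+1 *+ k.+1 = 0.
Proof.
move=> h1 h2; rewrite (LamI h2) (LamI h1); rewrite /I1s in h1 h2.
rewrite !derivD h2 derivB derivZ.
rewrite -scaler_nat -!mul_polyC; set c := (k.+1%:R : rat)%:P.
ring.
Qed.
Lemma sum_ord_nat (F : nat -> {poly rat}) k : \sum_(i < k) F i = \sum_(0 <= i < k) F i.
Proof. by rewrite big_mkord. Qed.

Lemma dLam1 : (Lam 1)^`() = 1.
Proof. by rewrite (LamI I1_0) derivD I1_0 dP0 scale0r subr0 derivC addr0. Qed.

Lemma I1 n : I1s n.
Proof.
suff H : forall m k, (k <= m)%N -> I1s k by exact: (H n n).
clear n.
elim=> [|n IH] k hk; first by move: hk; rewrite leqn0 => /eqP ->; exact: I1_0.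
move: hk; rewrite leq_eqVlt => /orP[/eqP ->|]; last by rewrite ltnS; apply: IH.
have In : I1s n by apply: IH.
have L0 : Lam 0 = 0 by [].
have S1 : \sum_(0 <= i < n.+1) Vs i * (Lam (n.+2 - i))^`() + P n = (P n.+1)^`().
  rewrite -[(P n.+1)^`()]/((Vs n.+2)^`()) -(Ylam n.+2).
  rewrite (sum_ord_nat (fun i => Vs i * (Lam (n.+2 - i))^`())) [X in _ = X]big_nat_recr // [X in _ = X + _]big_nat_recr // subnn.
  have -> : (n.+2 - n.+1)%N = 1%N by lia.
  by rewrite dLam1 mulr1 L0 deriv0 mulr0 addr0.
have S2 : \sum_(0 <= i < n.+1) Vs i * (Lam (n.+1 - i))^`() = (P n)^`().
  rewrite -[(P n)^`()]/((Vs n.+1)^`()) -(Ylam n.+1).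
  by rewrite (sum_ord_nat (fun i => Vs i * (Lam (n.+1 - i))^`())) [X in _ = X]big_nat_recr // subnn L0 deriv0 mulr0 /= addr0.
have S3 := Xlam n.
rewrite (sum_ord_nat (fun i => Vs i * (Lam (n - i).+1 *+ (n - i).+1))) in S3.
have D : \sum_(0 <= i < n.+1) Vs i * (Lam (n.+2 - i))^`() - \sum_(0 <= i < n.+1) Vs i * (Lam (n.+1 - i))^`()
   + \sum_(0 <= i < n.+1) Vs i * (Lam (n - i).+1 *+ (n - i).+1)
   = (Lam n.+2)^`() - (Lam n.+1)^`() + Lam n.+1 *+ n.+1.
  rewrite -sumrB -big_split big_nat_recl // big_nat_cond big1 ?addr0.
    by rewrite /= addr0 !subn0 !mul1r.
  move=> i /andP[/andP[_ hi] _].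
  rewrite /= -mulrBr -mulrDr.
  have -> : (n.+2 - i.+1)%N = (n - i.+1).+2 by lia.
  have -> : (n.+1 - i.+1)%N = (n - i.+1).+1 by lia.
  rewrite DLam0 ?mulr0 //; apply: IH; lia.
have S1' : \sum_(0 <= i < n.+1) Vs i * (Lam (n.+2 - i))^`() = (P n.+1)^`() - P n by rewrite -S1 addrK.
rewrite S1' S2 S3 LamE (LamI In) !derivD !derivN derivZ in D.
rewrite /I1s in In *; rewrite In in D.
rewrite In; move: D; rewrite -!scaler_nat -!mul_polyC.
set c := (n%:R : rat)%:P; set c1 := (n.+1%:R : rat)%:P.
have hc1 : c1 = c + 1 by rewrite /c1 /c -natr1 polyCD.
rewrite hc1 => /eqP; rewrite -subr_eq0 => /eqP D.
apply/eqP; rewrite -subr_eq0; apply/eqP.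
rewrite -oppr0 -D.
ring.
Qed.
Definition phi (p : {poly rat}) : {poly rat} := p \Po (- 'X).
Definition Ap (m : nat) : {poly rat} := - (m`!%:R) *: phi (P m).
Definition Bp (m : nat) : {poly rat} := - (m`!%:R) *: phi (Q m).

Lemma coef_phi (p : {poly rat}) i : (phi p)`_i = (-1) ^+ i * p`_i.
Proof.
rewrite /phi coef_comp_poly.
have E : forall j : nat, ((- 'X : {poly rat}) ^+ j)`_i = (-1) ^+ i * (i == j)%:R.
  move=> j; rewrite (exprNn 'X) -(@polyC1 rat) -polyCN -rmorphXn coefCM coefXn.
  by case: eqP => [->|]; rewrite ?mulr1 ?mulr0.
under eq_bigr do rewrite E.
case: (ltnP i (size p)) => hi.
  rewrite (bigD1 (Ordinal hi)) //= eqxx mulr1 big1 ?addr0; first by rewrite mulrC.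
  move=> j /eqP nj.
  rewrite eq_sym; case: eqP => [hij|]; last by rewrite !mulr0.
  by exfalso; apply: nj; apply: val_inj.
rewrite big1 ?(nth_default 0 hi) ?mulr0 // => j _.
by rewrite (gtn_eqF (leq_trans (ltn_ord j) hi)) !mulr0.
Qed.

Lemma phiD p q : phi (p + q) = phi p + phi q.
Proof. exact: comp_polyD. Qed.
Lemma phiM p q : phi (p * q) = phi p * phi q.
Proof. exact: comp_polyM. Qed.
Lemma phiZ c p : phi (c *: p) = c *: phi p.
Proof. exact: comp_polyZ. Qed.
Lemma phiN p : phi (- p) = - phi p.
Proof. by rewrite -scaleN1r phiZ scaleN1r. Qed.
Lemma phiMn p n : phi (p *+ n) = phi p *+ n.
Proof. by rewrite -!scaler_nat phiZ. Qed.
Lemma phi_deriv p : (phi p)^`() = - phi (p^`()).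
Proof. by rewrite /phi deriv_comp derivN derivX mulrN1. Qed.
Lemma phi_sum I (r : seq I) (F : I -> {poly rat}) :
  phi (\sum_(i <- r) F i) = \sum_(i <- r) phi (F i).
Proof. exact: raddf_sum. Qed.
Lemma Bp_eq n : Bp n.+1 = Ap n.+1 - (Ap n.+1)^`().
Proof.
rewrite /Bp /Ap QLam (LamI (I1 n)) phiD derivZ phi_deriv scalerN scalerDr.
by rewrite opprK.
Qed.

Lemma Ap_deriv n : (Ap n.+1)^`() = Ap n *+ (n.+1 * n) + (Ap n)^`() *+ n.+1.
Proof.
rewrite /Ap !derivZ !phi_deriv I1 phiD phiN phiZ factS.
rewrite -!scaler_nat -!mul_polyC !polyCN !natrM !polyCM -!natr1 !polyCD.
ring.
Qed.
Lemma Bp_rec j : Bp j.+1 = Ap j *+ j.+1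
  + \sum_(i < j) (Ap i * Bp (j - i)) *+ ((j - i) * 'C(j, i)).
Proof.
have X := Xlam j.
rewrite big_ord_recl subn0 in X.
set R := \sum_(i < j) _ in X.
have hL : Lam j.+1 *+ j.+1 = P j *+ j.+1 - R.
  by rewrite -X [Vs ord0]/= mul1r addrK.
have -> : Bp j.+1 = - (j`!%:R) *: phi (Lam j.+1 *+ j.+1).
  rewrite /Bp QLam phiMn -scaler_nat scalerA factS natrM.
  by rewrite mulNr mulrC.
rewrite hL phiD phiN phiMn scalerDr scalerN.
congr (_ + _); first by rewrite /Ap -scaler_nat scalerA mulrC -scalerA scaler_nat.
rewrite -scaleNr /R phi_sum scaler_sumr; apply: eq_bigr => i _.
have hi : (i <= j)%N by apply: ltnW.
have -> : (j - lift ord0 i).+1 = (j - i)%N by rewrite /= /bump /=; have := ltn_ord i; lia.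
rewrite [Vs _]/= /Ap /Bp QLam phiM phiMn.
rewrite -(bin_fact hi).
rewrite -!scaler_nat -!mul_polyC !polyCN !natrM !polyCM.
ring.
Qed.
Definition natp (p : {poly rat}) := forall i, p`_i \is a Num.nat.

Lemma natpD p q : natp p -> natp q -> natp (p + q).
Proof. by move=> hp hq i; rewrite coefD rpredD. Qed.
Lemma natpMn p n : natp p -> natp (p *+ n).
Proof. by move=> hp i; rewrite coefMn rpredMn. Qed.
Lemma natpM p q : natp p -> natp q -> natp (p * q).
Proof. by move=> hp hq i; rewrite coefM rpred_sum // => j _; rewrite rpredM. Qed.
Lemma natp_deriv p : natp p -> natp p^`().
Proof. by move=> hp i; rewrite coef_deriv rpredMn. Qed.

Lemma Ap0 i : (Ap 0)`_i = (i <= 1)%N%:R.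
Proof.
rewrite /Ap coefZ coef_phi /P /= coefB coefX coefC.
have f0 : (0`! = 1)%N by [].
rewrite f0 -mulNrn mulr1n.
case: i => [|[|i]] /=.
- by rewrite expr0 mul1r sub0r mulrNN mulr1.
- by rewrite expr1 subr0 mulr1 mulrNN mulr1.
- by rewrite subrr !mulr0.
Qed.

Lemma natp_all m : (forall i, (i <= m)%N -> natp (Ap i)) /\
                   (forall i, (0 < i <= m)%N -> natp (Bp i)).
Proof.
elim: m => [|m [IA IB]].
  split=> [i|i]; last by case: i.
  by rewrite leqn0 => /eqP -> j; rewrite Ap0; case: (j <= 1)%N.
have hB : natp (Bp m.+1).
  rewrite Bp_rec; apply: natpD; first by apply: natpMn; apply: IA.
  move=> k; rewrite coef_sum rpred_sum // => i _.
  rewrite coefMn rpredMn // natpM //; first by apply: IA; apply: ltnW.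
  by apply: IB; have := ltn_ord i; lia.
have hA : natp (Ap m.+1).
  have -> : Ap m.+1 = Bp m.+1 + (Ap m.+1)^`() by rewrite Bp_eq subrK.
  apply: natpD => //; rewrite Ap_deriv; apply: natpD; apply: natpMn.
    exact: IA.
  by apply: natp_deriv; apply: IA.
split=> i hi.
  have [h|->] : (i <= m)%N \/ i = m.+1 by lia.
    by apply: IA.
  exact: hA.
have [h|->] : (0 < i <= m)%N \/ i = m.+1 by lia.
  by apply: IB.
exact: hB.
Qed.
Lemma mulrn_injQ (x y : rat) m : x *+ m.+1 = y *+ m.+1 -> x = y.
Proof.
move/eqP; rewrite -subr_eq0 -mulrnBl mulrn_eq0 /= subr_eq0 => /eqP //.
Qed.

Lemma Ap_coefD n i : (Ap n.+1)`_i.+1 *+ i.+1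
  = (Ap n)`_i *+ (n.+1 * n) + (Ap n)`_i.+1 *+ i.+1 *+ n.+1.
Proof. by rewrite -coef_deriv Ap_deriv coefD !coefMn coef_deriv. Qed.

Lemma leadS n : (Ap n.+1)`_n.+1 = n`!%:R -> (forall i, (n.+1 < i)%N -> (Ap n.+1)`_i = 0) ->
  (Ap n.+2)`_n.+2 = (n.+1)`!%:R.
Proof.
move=> IHl IHz.
  apply: (@mulrn_injQ _ _ n.+1).
  rewrite Ap_coefD.
  rewrite IHl (IHz n.+2 (ltnSn _)).
  rewrite (mul0rn _ n.+2) (mul0rn _ n.+2) addr0.
  rewrite -(mulr_natr (n`!%:R : rat)) -(mulr_natr ((n.+1)`!%:R : rat)) -!natrM factS.
  congr (_%:R); nia.
Qed.

Lemma lead n : (Ap n.+1)`_n.+1 = n`!%:R /\ forall i, (n.+1 < i)%N -> (Ap n.+1)`_i = 0.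
Proof.
elim: n => [|n [IHl IHz]].
  split.
    by have := Ap_coefD 0 0; rewrite !Ap0 /= !mulr1n muln0 mulr0n add0r => ->.
  case=> [|[|i]] hi; try (exfalso; lia).
  apply: (@mulrn_injQ _ _ i.+1).
  by rewrite Ap_coefD !Ap0 muln0 mulr0n add0r (_ : (i.+1 < 1)%N = false) //=.
split; first exact: leadS.
case=> [|i] hi; first (exfalso; lia).
apply: (@mulrn_injQ _ _ i).
have h1 : (n.+1 < i)%N by lia.
have h2 : (n.+1 < i.+1)%N by lia.
rewrite Ap_coefD (IHz i h1) (IHz i.+1 h2) (mul0rn _ (n.+2 * n.+1)) (mul0rn _ i.+1) (mul0rn _ n.+2).
by rewrite addr0.
Qed.
Lemma sgnE n k : (k <= n)%N -> ((-1 : rat) ^+ (n.+1 + k)) = - (-1) ^+ (n - k).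
Proof.
move=> hk; have -> : (n.+1 + k = (n - k) + (k + k).+1)%N by lia.
rewrite exprD exprS exprD -exprMn mulrNN mulr1 expr1n mulr1.
by rewrite mulrN1.
Qed.

Lemma a_coef n k : (k <= n)%N -> a n k = (Ap n)`_(n - k).
Proof.
move=> hk; rewrite /a /Ap coefZ coef_phi (@sgnE n k hk).
set s := (-1 : rat) ^+ (n - k); set f := (n`!%:R : rat); set c := (P n)`_(n - k).
by rewrite !mulNr mulrCA mulrA.
Qed.

Lemma b_coef n k : (k <= n)%N -> b n k = (Bp n)`_(n - k).
Proof.
move=> hk; rewrite /b /Bp coefZ coef_phi (@sgnE n k hk).
set s := (-1 : rat) ^+ (n - k); set f := (n`!%:R : rat); set c := (Q n)`_(n - k).
by rewrite !mulNr mulrCA mulrA.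
Qed.

Theorem theorem4p10 (n k : nat) :
  (1 <= n)%N -> (k <= n)%N ->
  [/\ b n k \is a Num.int,
      0 <= a n k /\ 0 <= b n k,
      (1 <= k)%N -> a n k.-1 <= a n k
    & a n 0 = (n.-1)`!%:R].
Proof.
case: n => [|n] hn hk; first (exfalso; lia).
have [NA NB] := natp_all n.+1.
have hA := NA n.+1 (leqnn _).
have hB : natp (Bp n.+1) by apply: NB; rewrite ltn0Sn leqnn.
split.
- by rewrite b_coef //; move: (hB (n.+1 - k)%N); rewrite natrEint => /andP[].
- by split; [rewrite a_coef //; exact: natr_ge0 | rewrite b_coef //; exact: natr_ge0].
- move=> k1; rewrite !a_coef //; last by apply: leq_trans hk; apply: leq_pred.
  have -> : (n.+1 - k.-1 = (n.+1 - k).+1)%N by lia.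
  set j := (n.+1 - k)%N.
  have hb := natr_ge0 (hB j); rewrite Bp_eq coefB coef_deriv subr_ge0 in hb.
  apply: le_trans hb; rewrite mulrS lerDl mulrn_wge0 //.
  exact: natr_ge0.
- by rewrite a_coef // subn0 (lead n).1.
Qed.
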